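(* Let $d_1,d_2,d_3\ge2$ and let $|\varphi\rangle=\sum_{i=1}^{d_1}\sum_{j=1}^{d_2}\sum_{k=1}^{d_3}a_{ijk}|ijk\rangle$ be a normalized pure state in $H_1\otimes H_2\otimes H_3$. Then $$C_3^2(|\varphi\rangle)\ \ge\ \frac{1}{(d_1-1)(d_2-1)(d_3-1)}\sum C_3^2(|\varphi\rangle_{2\otimes2\otimes2}),$$ where the sum runs over all pure substates $|\varphi\rangle_{2\otimes2\otimes2}=\sum_{i\in\{i_1,i_2\}}\sum_{j\in\{j_1,j_2\}}\sum_{k\in\{k_1,k_2\}}a_{ijk}|ijk\rangle$ with $i_1\ne i_2$ in $\{1,\dots,d_1\}$, $j_1\ne j_2$ in $\{1,\dots,d_2\}$, $k_1\ne k_2$ in $\{1,\dots,d_3\}$ (unordered pairs).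
   Context: For a (not necessarily normalized) vector $|\varphi\rangle\in H_1\otimes\cdots\otimes H_N$ with $\sigma=|\varphi\rangle\langle\varphi|$, the $N$-partite concurrence is $C_N(|\varphi\rangle)=2^{1-N/2}\sqrt{(2^N-2)(\mathrm{tr}\,\sigma)^2-\sum_\alpha \mathrm{tr}(\sigma_\alpha^2)}$, where $\alpha$ runs over all $2^N-2$ nonempty proper subsets of $\{1,\dots,N\}$ and $\sigma_\alpha=\mathrm{tr}_{\bar\alpha}\sigma$. Here $N=3$ and the substates are unnormalized vectors in $\mathbb{C}^2\otimes\mathbb{C}^2\otimes\mathbb{C}^2$. *)

(* Defs.v *)
From mathcomp Require Import all_boot all_order all_algebra.
Set Implicit Arguments. Unset Strict Implicit. Unset Printing Implicit Defensive.
Import Order.TTheory GRing.Theory Num.Theory.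
Local Open Scope ring_scope.

Section Concurrence.
Variable C : numClosedFieldType.

(* operators on the Hilbert space with orthonormal basis indexed by T *)
Definition op (T : finType) := T -> T -> C.

Definition optr (T : finType) (A : op T) : C := \sum_(t : T) A t t.
Definition opmul (T : finType) (A B : op T) : op T :=
  fun t s => \sum_(u : T) A t u * B u s.

Definition dens (T : finType) (phi : T -> C) : op T :=
  fun x y => phi x * Num.conj (phi y).

Definition ptrR (A B : finType) (rho : op (A * B)%type) : op A :=
  fun a a' => \sum_(b : B) rho (a, b) (a', b).
Definition ptrL (A B : finType) (rho : op (A * B)%type) : op B :=
  fun b b' => \sum_(a : A) rho (a, b) (a, b').

Definition opmap (U T : finType) (f : U -> T) (rho : op T) : op U :=
  fun u u' => rho (f u) (f u').

Section Tripartite.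
Variables T1 T2 T3 : finType.
(* H1 (x) H2 (x) H3 with basis T1 * T2 * T3 = (T1 * T2) * T3 *)
Variable phi : (T1 * T2 * T3)%type -> C.

Definition sigma : op (T1 * T2 * T3)%type := dens phi.
Definition sigma12 : op (T1 * T2)%type := ptrR sigma.
Definition sigma3 : op T3 := ptrL sigma.
Definition sigma1 : op T1 := ptrR sigma12.
Definition sigma2 : op T2 := ptrL sigma12.
Definition sigma13 : op (T1 * T3)%type :=
  ptrR (opmap (fun p : T1 * T3 * T2 => (p.1.1, p.2, p.1.2)) sigma).
Definition sigma23 : op (T2 * T3)%type :=
  ptrL (opmap (fun p : T1 * (T2 * T3) => (p.1, p.2.1, p.2.2)) sigma).

Definition purity (T : finType) (A : op T) : C := optr (opmul A A).

(* sum over all 2^3 - 2 nonempty proper subsets alpha of {1,2,3} *)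
Definition sum_purities : C :=
  purity sigma1 + purity sigma2 + purity sigma3
  + purity sigma12 + purity sigma13 + purity sigma23.

(* C_3(phi) = 2^(1 - 3/2) sqrt((2^3 - 2) (tr sigma)^2 - sum_alpha tr(sigma_alpha^2)) *)
Definition concurrence3 : C :=
  (sqrtC 2)^-1 * sqrtC (((2 ^ 3 - 2)%N)%:R * (optr sigma) ^+ 2 - sum_purities).

End Tripartite.

Definition pick2 (T : finType) (u v : T) (b : 'I_2) : T :=
  if b == ord0 then u else v.

Definition substate (d1 d2 d3 : nat) (phi : ('I_d1 * 'I_d2 * 'I_d3)%type -> C)
  (i1 i2 : 'I_d1) (j1 j2 : 'I_d2) (k1 k2 : 'I_d3) :
  ('I_2 * 'I_2 * 'I_2)%type -> C :=
  fun p => phi (pick2 i1 i2 p.1.1, pick2 j1 j2 p.1.2, pick2 k1 k2 p.2).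

End Concurrence.

(* Main.v *)
Require Import Defs.
From mathcomp Require Import all_boot all_order all_algebra ring.
Import Order.TTheory GRing.Theory Num.Theory.
Set Implicit Arguments. Unset Strict Implicit. Unset Printing Implicit Defensive.
Local Open Scope ring_scope.
Lemma cnt (C : numClosedFieldType) (d : nat) (i1 : 'I_d) (c : C) :
  \sum_(i2 < d | i2 != i1) c = c *+ d.-1.
Proof.
rewrite (eq_bigl (fun i2 => i2 \in predC1 i1)) //.
by rewrite sumr_const cardC1 card_ord.
Qed.
Lemma tri (C : numClosedFieldType) (d : nat) (F : 'I_d -> 'I_d -> C) :
  \sum_(i1 < d) \sum_(i2 < d | (i1 < i2)%N) (F i1 i2 + F i2 i1) =
  \sum_(i1 < d) \sum_(i2 < d | i2 != i1) F i1 i2.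
Proof.
under eq_bigr do rewrite big_split /=.
rewrite big_split /=.
rewrite [X in _ + X = _](exchange_big_dep xpredT) //=.
symmetry.
under eq_bigr => i1 _.
  rewrite (bigID (fun i2 : 'I_d => (i1 < i2)%N)) /=.
  over.
rewrite big_split /=. congr (_ + _).
  apply: eq_bigr => i1 _; apply: eq_bigl => i2.
  case: ltnP => h; rewrite ?andbF ?andbT //.
  by apply/negP => /eqP e; rewrite e ltnn in h.
apply: eq_bigr => i1 _; apply: eq_bigl => i2.
by rewrite -leqNgt ltn_neqAle.
Qed.
Lemma sum_pair (R : nmodType) (A B : finType) (F : A * B -> R) :
  \sum_(x : A * B) F x = \sum_(a : A) \sum_(b : B) F (a, b).
Proof. by rewrite pair_bigA; apply: eq_bigr => -[a b]. Qed.
Lemma L1 (C : numClosedFieldType) (d : nat) (hd : (2 <= d)%N) (h : 'I_d -> 'I_d -> C)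
  (h0 : forall a b, 0 <= h a b) :
  \sum_(i1 < d) \sum_(i2 < d | (i1 < i2)%N) \sum_(w : 'I_2 * 'I_2)
     h (pick2 i1 i2 w.1) (pick2 i1 i2 w.2)
  <= (d.-1)%:R * \sum_(v : 'I_d * 'I_d) h v.1 v.2.
Proof.
have E : forall i1 i2 : 'I_d, \sum_(w : 'I_2 * 'I_2) h (pick2 i1 i2 w.1) (pick2 i1 i2 w.2)
   = (h i1 i1 + h i1 i2) + (h i2 i2 + h i2 i1).
  move=> i1 i2.
  transitivity (\sum_(b < 2) \sum_(b' < 2) h (pick2 i1 i2 b) (pick2 i1 i2 b')).
    exact: (@sum_pair C _ _ (fun w => h (pick2 i1 i2 w.1) (pick2 i1 i2 w.2))).
  rewrite !big_ord_recl !big_ord0 /pick2 /=.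
  rewrite !addr0; ring.
rewrite (_ : \sum_(i1 < d) _ = \sum_(i1 < d) \sum_(i2 < d | (i1 < i2)%N)
   ((fun a b => h a a + h a b) i1 i2 + (fun a b => h a a + h a b) i2 i1)); last first.
  by apply: eq_bigr => i1 _; apply: eq_bigr => i2 _; rewrite E.
rewrite tri.
under eq_bigr do rewrite big_split /= cnt.
rewrite sum_pair mulr_sumr; apply: ler_sum => a _.
rewrite [X in _ <= _ * X](bigD1 a) //= mulrDr mulr_natl; apply: lerD => //.
apply: ler_peMl; first by apply: sumr_ge0.
by rewrite ler1n -ltnS prednK // ltnW.
Qed.
Lemma sum2 (R : nmodType) (I J : finType) (F : I -> J -> R) :
  \sum_i \sum_j F i j = \sum_(p : I * J) F p.1 p.2.
Proof. exact: pair_bigA. Qed.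

Lemma zip (R : nmodType) (A1 A2 A3 : finType) (F : A1 * A2 * A3 -> A1 * A2 * A3 -> R) :
  \sum_(x : A1 * A2 * A3) \sum_(y : A1 * A2 * A3) F x y =
  \sum_(v1 : A1 * A1) \sum_(v2 : A2 * A2) \sum_(v3 : A3 * A3)
     F ((v1.1, v2.1), v3.1) ((v1.2, v2.2), v3.2).
Proof.
transitivity (\sum_(z : (A1 * A2 * A3) * (A1 * A2 * A3)) F z.1 z.2).
  exact: (@sum2 R _ _ F).
symmetry.
transitivity (\sum_(u : (A1 * A1) * (A2 * A2)) \sum_(v3 : A3 * A3)
     F ((u.1.1, u.2.1), v3.1) ((u.1.2, u.2.2), v3.2)).
  exact: (@sum2 R _ _ (fun v1 v2 => \sum_(v3 : A3 * A3) F ((v1.1, v2.1), v3.1) ((v1.2, v2.2), v3.2))).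
transitivity (\sum_(w : ((A1 * A1) * (A2 * A2)) * (A3 * A3))
     F ((w.1.1.1, w.1.2.1), w.2.1) ((w.1.1.2, w.1.2.2), w.2.2)).
  exact: (@sum2 R _ _ (fun u v3 => F ((u.1.1, u.2.1), v3.1) ((u.1.2, u.2.2), v3.2))).
pose h (w : ((A1 * A1) * (A2 * A2)) * (A3 * A3)) : (A1 * A2 * A3) * (A1 * A2 * A3) :=
  (((w.1.1.1, w.1.2.1), w.2.1), ((w.1.1.2, w.1.2.2), w.2.2)).
pose k (z : (A1 * A2 * A3) * (A1 * A2 * A3)) : ((A1 * A1) * (A2 * A2)) * (A3 * A3) :=
  (((z.1.1.1, z.2.1.1), (z.1.1.2, z.2.1.2)), (z.1.2, z.2.2)).
symmetry; rewrite (reindex h) /=; last first.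
  by apply: onW_bij; exists k => [[[[a1 a1'] [a2 a2']] [a3 a3']]|[[[a1 a2] a3] [[a1' a2'] a3']]].
by apply: eq_bigr => -[[[a1 a1'] [a2 a2']] [a3 a3']].
Qed.

Lemma Lexch (C : numClosedFieldType) (d : nat) (X : finType) (F : 'I_d -> 'I_d -> X -> C) :
  \sum_(i1 < d) \sum_(i2 < d | (i1 < i2)%N) \sum_(x : X) F i1 i2 x =
  \sum_(x : X) \sum_(i1 < d) \sum_(i2 < d | (i1 < i2)%N) F i1 i2 x.
Proof.
under eq_bigr do rewrite exchange_big.
by rewrite exchange_big.
Qed.
Lemma Lscale (C : numClosedFieldType) (d : nat) (X : finType) (c : C) (F : 'I_d -> 'I_d -> X -> C) :
  \sum_(i1 < d) \sum_(i2 < d | (i1 < i2)%N) \sum_(x : X) c * F i1 i2 x =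
  c * \sum_(i1 < d) \sum_(i2 < d | (i1 < i2)%N) \sum_(x : X) F i1 i2 x.
Proof.
rewrite mulr_sumr; apply: eq_bigr => i1 _; rewrite mulr_sumr; apply: eq_bigr => i2 _.
by rewrite mulr_sumr.
Qed.

Definition fpt (d1 d2 d3 : nat) (i1 i2 : 'I_d1) (j1 j2 : 'I_d2) (k1 k2 : 'I_d3)
  (p : 'I_2 * 'I_2 * 'I_2) : 'I_d1 * 'I_d2 * 'I_d3 :=
  (pick2 i1 i2 p.1.1, pick2 j1 j2 p.1.2, pick2 k1 k2 p.2).

Section Count.
Variables (C : numClosedFieldType) (d1 d2 d3 : nat).
Hypotheses (hd1 : (2 <= d1)%N) (hd2 : (2 <= d2)%N) (hd3 : (2 <= d3)%N).
Variable g : 'I_d1 * 'I_d2 * 'I_d3 -> 'I_d1 * 'I_d2 * 'I_d3 -> C.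
Hypothesis g0 : forall x y, 0 <= g x y.

Lemma level2 (a a' : 'I_d1) :
  \sum_(j1 < d2) \sum_(j2 < d2 | (j1 < j2)%N) \sum_(k1 < d3) \sum_(k2 < d3 | (k1 < k2)%N)
  \sum_(w2 : 'I_2 * 'I_2) \sum_(w3 : 'I_2 * 'I_2)
    g ((a, pick2 j1 j2 w2.1), pick2 k1 k2 w3.1) ((a', pick2 j1 j2 w2.2), pick2 k1 k2 w3.2)
  <= (d2.-1 * d3.-1)%:R * \sum_(v2 : 'I_d2 * 'I_d2) \sum_(v3 : 'I_d3 * 'I_d3)
    g ((a, v2.1), v3.1) ((a', v2.2), v3.2).
Proof.
under eq_bigr => j1 _ do under eq_bigr => j2 _ do rewrite Lexch.
apply: (@le_trans _ _ (\sum_(j1 < d2) \sum_(j2 < d2 | (j1 < j2)%N) \sum_(w2 : 'I_2 * 'I_2)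
   d3.-1%:R * \sum_(v3 : 'I_d3 * 'I_d3) g ((a, pick2 j1 j2 w2.1), v3.1) ((a', pick2 j1 j2 w2.2), v3.2))).
  apply: ler_sum => j1 _; apply: ler_sum => j2 _; apply: ler_sum => w2 _.
  exact: (L1 (h := fun c c' => g ((a, pick2 j1 j2 w2.1), c) ((a', pick2 j1 j2 w2.2), c')) hd3 (fun _ _ => g0 _ _)).
rewrite Lscale natrM [d2.-1%:R * _]mulrC -mulrA; apply: ler_wpM2l; first exact: ler0n.
apply: (L1 (h := fun b b' => \sum_(v3 : 'I_d3 * 'I_d3) g ((a, b), v3.1) ((a', b'), v3.2)) hd2).
by move=> b b'; apply: sumr_ge0.
Qed.

Lemma count :
  \sum_(i1 < d1) \sum_(i2 < d1 | (i1 < i2)%N) \sum_(j1 < d2) \sum_(j2 < d2 | (j1 < j2)%N)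
  \sum_(k1 < d3) \sum_(k2 < d3 | (k1 < k2)%N)
  \sum_(p : 'I_2 * 'I_2 * 'I_2) \sum_(q : 'I_2 * 'I_2 * 'I_2)
     g (fpt i1 i2 j1 j2 k1 k2 p) (fpt i1 i2 j1 j2 k1 k2 q)
  <= (d1.-1 * d2.-1 * d3.-1)%:R * \sum_x \sum_y g x y.
Proof.
rewrite (zip g).
under eq_bigr => i1 _ do under eq_bigr => i2 _ do under eq_bigr => j1 _ do
  under eq_bigr => j2 _ do under eq_bigr => k1 _ do under eq_bigr => k2 _ do
  rewrite (zip (fun p q => g (fpt i1 i2 j1 j2 k1 k2 p) (fpt i1 i2 j1 j2 k1 k2 q))) /fpt /=.
under eq_bigr => i1 _ do under eq_bigr => i2 _ do
  (under eq_bigr => j1 _ do under eq_bigr => j2 _ do rewrite Lexch; rewrite Lexch).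
apply: (@le_trans _ _ (\sum_(i1 < d1) \sum_(i2 < d1 | (i1 < i2)%N) \sum_(w1 : 'I_2 * 'I_2)
   (d2.-1 * d3.-1)%:R * \sum_(v2 : 'I_d2 * 'I_d2) \sum_(v3 : 'I_d3 * 'I_d3)
    g ((pick2 i1 i2 w1.1, v2.1), v3.1) ((pick2 i1 i2 w1.2, v2.2), v3.2))).
  apply: ler_sum => i1 _; apply: ler_sum => i2 _; apply: ler_sum => w1 _.
  exact: level2.
have -> : (d1.-1 * d2.-1 * d3.-1)%:R = (d2.-1 * d3.-1)%:R * d1.-1%:R :> C.
  by rewrite -natrM [in RHS]mulnC mulnA.
rewrite Lscale -mulrA; apply: ler_wpM2l; first exact: ler0n.
apply: (L1 (h := fun b b' => \sum_(v2 : 'I_d2 * 'I_d2) \sum_(v3 : 'I_d3 * 'I_d3)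
    g ((b, v2.1), v3.1) ((b', v2.2), v3.2)) hd1).
by move=> b b'; apply: sumr_ge0 => v2 _; apply: sumr_ge0.
Qed.
End Count.


Section Alg.
Variable C : numClosedFieldType.



Section Bi.
Variables (A B : finType) (psi : A * B -> C).
Definition tr2 : C := \sum_(x : A * B) psi x * (psi x)^*.
Definition R2 : C := \sum_(x : A * B) \sum_(y : A * B)
  psi x * psi y * (psi (y.1, x.2))^* * (psi (x.1, y.2))^*.
Definition Q2 : C := \sum_(x : A * B) \sum_(y : A * B)
  `|psi x * psi y - psi (y.1, x.2) * psi (x.1, y.2)| ^+ 2.

Lemma purR : purity (ptrR (dens psi)) = R2.
Proof.
rewrite /purity /optr /opmul /ptrR /dens /R2. rewrite sum_pair.
apply: eq_bigr => a _; under [RHS]eq_bigr do rewrite sum_pair.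
rewrite [RHS]exchange_big; apply: eq_bigr => u _.
rewrite big_distrl /=; apply: eq_bigr => b _; rewrite big_distrr /=.
apply: eq_bigr => b' _ /=; ring.
Qed.

Lemma purL : purity (ptrL (dens psi)) = R2.
Proof.
rewrite /purity /optr /opmul /ptrL /dens /R2 sum_pair.
under [RHS]eq_bigr => a _ do (under eq_bigr => b _ do (rewrite sum_pair exchange_big)).
rewrite [RHS]exchange_big; apply: eq_bigr => b _ /=.
rewrite [RHS]exchange_big; apply: eq_bigr => b' _ /=.
rewrite big_distrl /=; apply: eq_bigr => a _ /=; rewrite big_distrr /=.
apply: eq_bigr => a' _ /=; ring.
Qed.

Lemma QR : Q2 = tr2 ^+ 2 *+ 2 - R2 *+ 2.
Proof.
pose Af (z : (A * B) * (A * B)) := psi z.1 * psi z.2.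
pose sw (z : (A * B) * (A * B)) := ((z.2.1, z.1.2), (z.1.1, z.2.2)).
have swK : involutive sw by move=> [[a b] [a' b']].
have Hsw : forall F : (A * B) * (A * B) -> C, \sum_z F z = \sum_z F (sw z).
  by move=> F; apply: reindex_inj; apply: inv_inj.
have ER : R2 = \sum_z Af z * (Af (sw z))^*.
  rewrite /R2 sum2; apply: eq_bigr => -[[a b] [a' b']] _ /=.
  rewrite /Af /= rmorphM /=; ring.
have ET : tr2 ^+ 2 = \sum_z Af z * (Af z)^*.
  rewrite /tr2 expr2 big_distrl /=; under eq_bigr do rewrite big_distrr /=. rewrite sum2; apply: eq_bigr => -[x y] _ /=.
  rewrite /Af /= rmorphM /=; ring.
have EQ : Q2 = \sum_z ((Af z * (Af z)^* + Af (sw z) * (Af (sw z))^*)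
   - (Af z * (Af (sw z))^* + Af (sw z) * (Af z)^*)).
  rewrite /Q2 sum2; apply: eq_bigr => -[[a b] [a' b']] _.
  rewrite normCK /Af /= rmorphB /= !rmorphM /=; ring.
rewrite EQ sumrB !big_split /=.
have -> : \sum_z Af (sw z) * (Af (sw z))^* = \sum_z Af z * (Af z)^*.
  by rewrite [RHS](Hsw (fun z => Af z * (Af z)^*)).
have -> : \sum_z Af (sw z) * (Af z)^* = \sum_z Af z * (Af (sw z))^*.
  by rewrite (Hsw (fun z => Af (sw z) * (Af z)^*)); apply: eq_bigr => z _; rewrite swK.
rewrite -ER -ET; ring.
Qed.
End Bi.

Lemma purity_ext (T : finType) (X Y : op C T) :
  (forall x y, X x y = Y x y) -> purity X = purity Y.
Proof.
move=> H; rewrite /purity /optr /opmul; apply: eq_bigr => a _.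
by apply: eq_bigr => b _; rewrite !H.
Qed.

Section Tri.
Variables (T1 T2 T3 : finType) (phi : (T1 * T2 * T3)%type -> C).
Definition psiA (p : (T1 * (T2 * T3))%type) : C := phi (p.1, p.2.1, p.2.2).
Definition psiB (p : (T1 * T3 * T2)%type) : C := phi (p.1.1, p.2, p.1.2).

Lemma sumA (R : nmodType) (F : (T1 * (T2 * T3))%type -> R) :
  \sum_(x : T1 * (T2 * T3)) F x = \sum_(x : T1 * T2 * T3) F (x.1.1, (x.1.2, x.2)).
Proof.
transitivity (\sum_(a : T1) \sum_(bc : T2 * T3) F (a, bc)); first exact: sum_pair.
symmetry; transitivity (\sum_(ab : T1 * T2) \sum_(c : T3) F (ab.1, (ab.2, c))).
  exact: sum_pair.
transitivity (\sum_(a : T1) \sum_(b : T2) \sum_(c : T3) F (a, (b, c))).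
  exact: (@sum_pair R T1 T2 (fun ab => \sum_(c : T3) F (ab.1, (ab.2, c)))).
apply: eq_bigr => a _; symmetry.
exact: (@sum_pair R T2 T3 (fun bc => F (a, bc))).
Qed.

Lemma sumB (R : nmodType) (F : (T1 * T3 * T2)%type -> R) :
  \sum_(x : T1 * T3 * T2) F x = \sum_(x : T1 * T2 * T3) F ((x.1.1, x.2), x.1.2).
Proof.
transitivity (\sum_(ac : T1 * T3) \sum_(b : T2) F (ac, b)); first exact: sum_pair.
transitivity (\sum_(a : T1) \sum_(c : T3) \sum_(b : T2) F ((a, c), b)).
  exact: (@sum_pair R T1 T3 (fun ac => \sum_(b : T2) F (ac, b))).
symmetry; transitivity (\sum_(ab : T1 * T2) \sum_(c : T3) F ((ab.1, c), ab.2)).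
  exact: sum_pair.
transitivity (\sum_(a : T1) \sum_(b : T2) \sum_(c : T3) F ((a, c), b)).
  exact: (@sum_pair R T1 T2 (fun ab => \sum_(c : T3) F ((ab.1, c), ab.2))).
apply: eq_bigr => a _; exact: exchange_big.
Qed.

Definition Kf (x y : (T1 * T2 * T3)%type) : C :=
  `|phi x * phi y - phi (y.1, x.2) * phi (x.1, y.2)| ^+ 2
  + `|phi x * phi y - phi ((y.1.1, x.1.2), x.2) * phi ((x.1.1, y.1.2), y.2)| ^+ 2
  + `|phi x * phi y - phi ((y.1.1, x.1.2), y.2) * phi ((x.1.1, y.1.2), x.2)| ^+ 2.

Lemma conc_formula :
  concurrence3 phi ^+ 2 = 2^-1 * \sum_x \sum_y Kf x y.
Proof.
have PA : Q2 psiA = \sum_x \sum_y `|phi x * phi y - phi ((y.1.1, x.1.2), x.2) * phi ((x.1.1, y.1.2), y.2)| ^+ 2.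
  rewrite /Q2 sumA; apply: eq_bigr => -[[a b] c] _; rewrite sumA.
  by apply: eq_bigr => -[[a' b'] c'] _.
have PB : Q2 psiB = \sum_x \sum_y `|phi x * phi y - phi ((y.1.1, x.1.2), y.2) * phi ((x.1.1, y.1.2), x.2)| ^+ 2.
  rewrite /Q2 sumB; apply: eq_bigr => -[[a b] c] _; rewrite sumB.
  by apply: eq_bigr => -[[a' b'] c'] _.
have -> : \sum_x \sum_y Kf x y = Q2 phi + Q2 psiA + Q2 psiB.
  rewrite PA PB /Q2 -!big_split /=; apply: eq_bigr => x _; rewrite -!big_split /=.
  by apply: eq_bigr => y _.
have tA : tr2 psiA = tr2 phi.
  rewrite /tr2 sumA; by apply: eq_bigr => -[[a b] c] _.
have tB : tr2 psiB = tr2 phi.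
  rewrite /tr2 sumB; by apply: eq_bigr => -[[a b] c] _.
have P1 : purity (sigma1 phi) = R2 psiA.
  rewrite -purR; apply: purity_ext => a a'.
  rewrite /sigma1 /sigma12 /ptrR /dens /= sum_pair; apply: eq_bigr => b _.
  by apply: eq_bigr => c _.
have P2 : purity (sigma2 phi) = R2 psiB.
  rewrite -purL; apply: purity_ext => b b'.
  rewrite /sigma2 /sigma12 /ptrR /ptrL /dens /= sum_pair; apply: eq_bigr => a _.
  by apply: eq_bigr => c _.
have P3 : purity (sigma3 phi) = R2 phi by rewrite -purL.
have P12 : purity (sigma12 phi) = R2 phi by rewrite -purR.
have P13 : purity (sigma13 phi) = R2 psiB by rewrite -purR.
have P23 : purity (sigma23 phi) = R2 psiA by rewrite -purL.
rewrite !QR tA tB /concurrence3 /sum_purities P1 P2 P3 P12 P13 P23.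
have -> : optr (sigma phi) = tr2 phi by [].
rewrite exprMn sqrtCK exprVn sqrtCK /=.
have -> : (2 ^ 3 - 2)%N = 6%N by [].
congr (_ * _); ring.
Qed.
End Tri.
End Alg.


Theorem mainTheorem2 (C : numClosedFieldType) (d1 d2 d3 : nat)
  (hd1 : (2 <= d1)%N) (hd2 : (2 <= d2)%N) (hd3 : (2 <= d3)%N)
  (phi : ('I_d1 * 'I_d2 * 'I_d3)%type -> C)
  (hnorm : \sum_(x : ('I_d1 * 'I_d2 * 'I_d3)%type) `|phi x| ^+ 2 = 1) :
  (((d1 - 1) * (d2 - 1) * (d3 - 1))%N%:R)^-1 *
    (\sum_(i1 < d1) \sum_(i2 < d1 | (i1 < i2)%N)
     \sum_(j1 < d2) \sum_(j2 < d2 | (j1 < j2)%N)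
     \sum_(k1 < d3) \sum_(k2 < d3 | (k1 < k2)%N)
       (concurrence3 (substate phi i1 i2 j1 j2 k1 k2)) ^+ 2)
  <= (concurrence3 phi) ^+ 2.

Proof.
have E : \sum_(i1 < d1) \sum_(i2 < d1 | (i1 < i2)%N)
     \sum_(j1 < d2) \sum_(j2 < d2 | (j1 < j2)%N)
     \sum_(k1 < d3) \sum_(k2 < d3 | (k1 < k2)%N)
       (concurrence3 (substate phi i1 i2 j1 j2 k1 k2)) ^+ 2 =
  2^-1 * \sum_(i1 < d1) \sum_(i2 < d1 | (i1 < i2)%N)
     \sum_(j1 < d2) \sum_(j2 < d2 | (j1 < j2)%N)
     \sum_(k1 < d3) \sum_(k2 < d3 | (k1 < k2)%N)
     \sum_(p : 'I_2 * 'I_2 * 'I_2) \sum_(q : 'I_2 * 'I_2 * 'I_2)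
       Kf phi (fpt i1 i2 j1 j2 k1 k2 p) (fpt i1 i2 j1 j2 k1 k2 q).
  rewrite mulr_sumr; apply: eq_bigr => i1 _; rewrite mulr_sumr; apply: eq_bigr => i2 _.
  rewrite mulr_sumr; apply: eq_bigr => j1 _; rewrite mulr_sumr; apply: eq_bigr => j2 _.
  rewrite mulr_sumr; apply: eq_bigr => k1 _; rewrite mulr_sumr; apply: eq_bigr => k2 _.
  rewrite conc_formula; congr (_ * _); apply: eq_bigr => p _; apply: eq_bigr => q _.
have g0 : forall x y, 0 <= Kf phi x y.
  by move=> x y; rewrite /Kf; apply: addr_ge0; first apply: addr_ge0; apply: exprn_ge0.
have Hc := count hd1 hd2 hd3 g0.
rewrite E conc_formula !subn1 mulrA.
set S := \sum_(i1 < d1) _.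
set K := \sum_x _.
set D := (d1.-1 * d2.-1 * d3.-1)%N.
have D0 : (0 < D)%N.
  by rewrite /D !muln_gt0 -!subn1 !subn_gt0 hd1 hd2 hd3.
have HD : D%:R != 0 :> C by rewrite pnatr_eq0 -lt0n.
apply: (@le_trans _ _ (D%:R^-1 * 2^-1 * (D%:R * K))).
  apply: ler_wpM2l => //; apply: mulr_ge0; rewrite invr_ge0 ?ler0n //.
rewrite mulrA [_ * D%:R]mulrC mulrA mulfV // mul1r. exact: lexx.
Qed.
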